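(* For every admissible triple $(j_1,j_2,j_3)\in\mathbf J$, the top total-degree part of the Laurent polynomial $\phi_{j_1,j_2,j_3}$ (total degree of $x_{12}^{a}x_{13}^{b}x_{23}^{c}$ being $a+b+c$) has total degree $(j_1+j_2+j_3)/2$ and consists of a single monomial $c\,x_{12}^{d_3}x_{13}^{d_2}x_{23}^{d_1}$ with $c\in\mathbb C\setminus\{0\}$, where $$d_1=\frac{-j_1+j_2+j_3}{2},\quad d_2=\frac{j_1-j_2+j_3}{2},\quad d_3=\frac{j_1+j_2-j_3}{2}.$$
   Context: A triple $(j_1,j_2,j_3)$ of nonnegative integers is admissible if $|j_1-j_2|\le j_3\le j_1+j_2$ and $j_1+j_2+j_3$ is even; $\mathbf J$ denotes the set of admissible triples. Let $\mathcal H=\mathbb C[x_{12}+x_{12}^{-1},x_{13}+x_{13}^{-1},x_{23}+x_{23}^{-1}]\subset\mathbb C[x_{12}^{\pm1},x_{13}^{\pm1},x_{23}^{\pm1}]$. For $a,b\in\{\pm1\}$ set $K_{a,b}(j_1,j_2,j_3)=ab\,\frac{(aj_1+bj_2+j_3+a+b+2)(aj_1+bj_2-j_3+a+b)}{4(j_1+1)(j_2+1)}$. The genus two Schur polynomials $(\phi_{j_1,j_2,j_3})_{(j_1,j_2,j_3)\in\mathbf J}$ are the unique family in $\mathcal H$ with $\phi_{0,0,0}=1$ such that for all admissible $(j_1,j_2,j_3)$: $(x_{12}+x_{12}^{-1})\phi_{j_1,j_2,j_3}=\sum_{a,b\in\{\pm1\}}K_{a,b}(j_1,j_2,j_3)\phi_{j_1+a,j_2+b,j_3}$,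 $(x_{13}+x_{13}^{-1})\phi_{j_1,j_2,j_3}=\sum_{a,b\in\{\pm1\}}K_{a,b}(j_1,j_3,j_2)\phi_{j_1+a,j_2,j_3+b}$, $(x_{23}+x_{23}^{-1})\phi_{j_1,j_2,j_3}=\sum_{a,b\in\{\pm1\}}K_{a,b}(j_2,j_3,j_1)\phi_{j_1,j_2+a,j_3+b}$, where $\phi$ of a non-admissible triple is interpreted as $0$. *)

(* Defs.v *)
From HB Require Import structures.
From mathcomp Require Import all_boot all_order all_algebra.
Set Implicit Arguments. Unset Strict Implicit. Unset Printing Implicit Defensive.
Import Order.TTheory GRing.Theory Num.Theory.
Local Open Scope ring_scope.

(* Laurent polynomials in x12, x13, x23 with coefficients in C, represented
   by their coefficient function: (lp C) f a b c = coefficient of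
   x12^a x13^b x23^c.  Elements of H have finite support (see inH). *)
Definition lp (C : Type) := int -> int -> int -> C.

Section Laurent.
Variable C : numClosedFieldType.

Definition lp0 : lp C := fun _ _ _ => 0.
Definition lp1 : lp C := fun a b c => if (a == 0) && (b == 0) && (c == 0) then 1 else 0.
Definition lpadd (f g : lp C) : lp C := fun a b c => f a b c + g a b c.
Definition lpscale (k : C) (f : lp C) : lp C := fun a b c => k * f a b c.

(* multiplication by x12 + x12^-1, x13 + x13^-1, x23 + x23^-1 *)
Definition mulY12 (f : lp C) : lp C := fun a b c => f (a - 1) b c + f (a + 1) b c.
Definition mulY13 (f : lp C) : lp C := fun a b c => f a (b - 1) c + f a (b + 1) c.
Definition mulY23 (f : lp C) : lp C := fun a b c => f a b (c - 1) + f a b (c + 1).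

(* H = C[y12, y13, y23], y_ij = x_ij + x_ij^-1: the C-span of all monomials
   in the y_ij, i.e. the smallest subspace containing 1 and stable under
   multiplication by each y_ij. *)
Inductive inH : lp C -> Prop :=
| inH_one : inH lp1
| inH_add f g : inH f -> inH g -> inH (lpadd f g)
| inH_scale k f : inH f -> inH (lpscale k f)
| inH_mul12 f : inH f -> inH (mulY12 f)
| inH_mul13 f : inH f -> inH (mulY13 f)
| inH_mul23 f : inH f -> inH (mulY23 f).

Definition admissibleZ (j1 j2 j3 : int) : bool :=
  [&& 0 <= j1, 0 <= j2, 0 <= j3, `|j1 - j2| <= j3, j3 <= j1 + j2
   & ~~ odd (absz (j1 + j2 + j3))].

Definition admissible (j1 j2 j3 : nat) : bool :=
  admissibleZ (Posz j1) (Posz j2) (Posz j3).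

Definition Kc (a b j1 j2 j3 : int) : C :=
  ((a * b * (a * j1 + b * j2 + j3 + a + b + 2) * (a * j1 + b * j2 - j3 + a + b))%:~R)
  / ((4 * (j1 + 1) * (j2 + 1))%:~R).

Definition extZ (phi : nat -> nat -> nat -> lp C) (j1 j2 j3 : int) : lp C :=
  if admissibleZ j1 j2 j3 then phi (absz j1) (absz j2) (absz j3) else lp0.

Definition signs : seq int := [:: 1; -1].

Definition is_genus2_schur (phi : nat -> nat -> nat -> lp C) : Prop :=
  (forall j1 j2 j3, admissible j1 j2 j3 -> inH (phi j1 j2 j3)) /\
  phi 0%N 0%N 0%N = lp1 /\
  (forall j1 j2 j3 : nat, admissible j1 j2 j3 -> forall x y z : int,
     mulY12 (phi j1 j2 j3) x y z =
       \sum_(a <- signs) \sum_(b <- signs)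
          Kc a b j1 j2 j3 * extZ phi (Posz j1 + a) (Posz j2 + b) j3 x y z) /\
  (forall j1 j2 j3 : nat, admissible j1 j2 j3 -> forall x y z : int,
     mulY13 (phi j1 j2 j3) x y z =
       \sum_(a <- signs) \sum_(b <- signs)
          Kc a b j1 j3 j2 * extZ phi (Posz j1 + a) j2 (Posz j3 + b) x y z) /\
  (forall j1 j2 j3 : nat, admissible j1 j2 j3 -> forall x y z : int,
     mulY23 (phi j1 j2 j3) x y z =
       \sum_(a <- signs) \sum_(b <- signs)
          Kc a b j2 j3 j1 * extZ phi j1 (Posz j2 + a) (Posz j3 + b) x y z).
End Laurent.

(* Main.v *)
Require Import Defs.
From HB Require Import structures.
From mathcomp Require Import all_boot all_order all_algebra.
From mathcomp Require Import zify.
Import Order.TTheory GRing.Theory Num.Theory.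
Local Open Scope ring_scope.

Lemma adm_ex (i1 i2 i3 : int) : admissibleZ i1 i2 i3 ->
  exists d1 d2 d3 : nat, i1 = Posz (d2 + d3)%N /\ i2 = Posz (d1 + d3)%N /\ i3 = Posz (d1 + d2)%N.
Proof.
rewrite /admissibleZ => h.
set k := ((absz (i1+i2+i3)%R)./2)%N.
exists (absz (Posz k - i1)), (absz (Posz k - i2)), (absz (Posz k - i3)).
rewrite /k; lia.
Qed.

Lemma adm_d d1 d2 d3 : admissible (d2+d3) (d1+d3) (d1+d2).
Proof. rewrite /admissible /admissibleZ; lia. Qed.

Lemma Kpp_neq0 (C : numClosedFieldType) (j1 j2 j3 : int) : 0 <= j1 -> 0 <= j2 -> 0 <= j3 ->
  0 < j1 + j2 - j3 + 2 -> Kc C 1 1 j1 j2 j3 != 0.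
Proof.
move=> h1 h2 h3 h4; rewrite /Kc mulf_neq0 // ?invr_eq0 intr_eq0 !mulf_eq0; lia.
Qed.

Section Main.
Variable C : numClosedFieldType.
Variable phi : nat -> nat -> nat -> lp C.
Hypothesis H : is_genus2_schur phi.

Definition Q (d1 d2 d3 : nat) :=
  phi (d2+d3) (d1+d3) (d1+d2) (Posz d3) (Posz d2) (Posz d1) != 0 /\
  (forall a b c : int, Posz (d1+d2+d3)%N <= a + b + c ->
     (a, b, c) != (Posz d3, Posz d2, Posz d1) ->
     phi (d2+d3) (d1+d3) (d1+d2) a b c = 0).

Lemma Qlt d1 d2 d3 : Q d1 d2 d3 -> forall a b c : int, Posz (d1+d2+d3)%N < a + b + c ->
  phi (d2+d3) (d1+d3) (d1+d2) a b c = 0.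
Proof.
move=> [_ hQ] a b c hl; apply: hQ; first lia.
by apply/negP => /eqP [h1 h2 h3]; move: hl; rewrite h1 h2 h3; lia.
Qed.

Lemma extZ_eq (a b c : nat) (i1 i2 i3 : int) : i1 = Posz a -> i2 = Posz b -> i3 = Posz c ->
  admissible a b c -> extZ phi i1 i2 i3 = phi a b c.
Proof. by move=> -> -> -> h; rewrite /extZ (_ : admissibleZ _ _ _ = true). Qed.

Lemma extZ0 (M : nat) (IH : forall d1 d2 d3, (d1+d2+d3 < M)%N -> Q d1 d2 d3)
  (i1 i2 i3 x y z : int) : i1 + i2 + i3 < 2 * Posz M -> i1 + i2 + i3 < 2 * (x + y + z) ->
  extZ phi i1 i2 i3 x y z = 0.
Proof.
move=> h1 h2; rewrite /extZ; case: ifP => // hA.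
have [d1 [d2 [d3 [e1 [e2 e3]]]]] := adm_ex _ _ _ hA.
subst => /=. apply: Qlt; [apply: IH|]; lia.
Qed.

Lemma step12 M : (forall d1 d2 d3, (d1+d2+d3 < M)%N -> Q d1 d2 d3) ->
  forall d1 d2 e, (d1+d2+e.+1)%N = M -> Q d1 d2 e.+1.
Proof.
move=> IH d1 d2 e hM.
have [hI [h0 [H12 [H13 H23]]]] := H.
have IHd : Q d1 d2 e by apply: IH; lia.
have hadm := adm_d d1 d2 e.
have key : forall x y z : int, Posz M <= x + y + z ->
  Kc C 1 1 (d2+e)%N (d1+e)%N (d1+d2)%N * phi (d2+e.+1) (d1+e.+1) (d1+d2) x y z
  = phi (d2+e) (d1+e) (d1+d2) (x-1) y z.
  move=> x y z hxyz.
  have := H12 _ _ _ hadm x y z.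
  rewrite /mulY12 /signs !big_cons !big_nil.
  rewrite (@extZ_eq (d2+e.+1)%N (d1+e.+1)%N (d1+d2)%N); try lia; last exact: adm_d.
  rewrite !(@extZ0 _ IH); try lia.
  rewrite (@Qlt _ _ _ IHd (x+1)); last lia.
  by rewrite !mulr0 !addr0 => ->.
have Kne : Kc C 1 1 (d2+e)%N (d1+e)%N (d1+d2)%N != 0 by apply: Kpp_neq0; lia.
split.
  apply/eqP => hz; have := key (Posz e.+1) (Posz d2) (Posz d1) ltac:(lia).
  rewrite hz mulr0 (_ : Posz e.+1 - 1 = Posz e); last lia.
  move=> /esym hz'; case: IHd => + _; rewrite hz' eqxx //; lia.
move=> a b c hl hne.
have := key a b c ltac:(lia).
have -> : phi (d2 + e) (d1 + e) (d1 + d2) (a - 1) b c = 0.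
  case: IHd => _; apply; first lia.
  apply/negP => /eqP [h1 h2 h3]; move/negP: hne; apply; apply/eqP.
  rewrite h2 h3; congr (_, _, _); lia.
by move/eqP; rewrite mulf_eq0 (negbTE Kne) /= => /eqP.
Qed.

Lemma step13 M : (forall d1 d2 d3, (d1+d2+d3 < M)%N -> Q d1 d2 d3) ->
  forall d1 e d3, (d1+e.+1+d3)%N = M -> Q d1 e.+1 d3.
Proof.
move=> IH d1 e d3 hM.
have [hI [h0 [H12 [H13 H23]]]] := H.
have IHd : Q d1 e d3 by apply: IH; lia.
have hadm := adm_d d1 e d3.
have key : forall x y z : int, Posz M <= x + y + z ->
  Kc C 1 1 (e+d3)%N (d1+e)%N (d1+d3)%N * phi (e.+1+d3) (d1+d3) (d1+e.+1) x y z
  = phi (e+d3) (d1+d3) (d1+e) x (y-1) z.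
  move=> x y z hxyz.
  have := H13 _ _ _ hadm x y z.
  rewrite /mulY13 /signs !big_cons !big_nil.
  rewrite (@extZ_eq (e.+1+d3)%N (d1+d3)%N (d1+e.+1)%N); try lia; last exact: adm_d.
  rewrite !(@extZ0 _ IH); try lia.
  rewrite (@Qlt _ _ _ IHd x (y+1)); last lia.
  by rewrite !mulr0 !addr0 => ->.
have Kne : Kc C 1 1 (e+d3)%N (d1+e)%N (d1+d3)%N != 0 by apply: Kpp_neq0; lia.
split.
  apply/eqP => hz; have := key (Posz d3) (Posz e.+1) (Posz d1) ltac:(lia).
  rewrite hz mulr0 (_ : Posz e.+1 - 1 = Posz e); last lia.
  move=> /esym hz'; case: IHd => + _; rewrite hz' eqxx //; lia.
move=> a b c hl hne.
have := key a b c ltac:(lia).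
have -> : phi (e+d3) (d1+d3) (d1+e) a (b - 1) c = 0.
  case: IHd => _; apply; first lia.
  apply/negP => /eqP [h1 h2 h3]; move/negP: hne; apply; apply/eqP.
  rewrite h1 h3; congr (_, _, _); lia.
by move/eqP; rewrite mulf_eq0 (negbTE Kne) /= => /eqP.
Qed.

Lemma step23 M : (forall d1 d2 d3, (d1+d2+d3 < M)%N -> Q d1 d2 d3) ->
  forall e d2 d3, (e.+1+d2+d3)%N = M -> Q e.+1 d2 d3.
Proof.
move=> IH e d2 d3 hM.
have [hI [h0 [H12 [H13 H23]]]] := H.
have IHd : Q e d2 d3 by apply: IH; lia.
have hadm := adm_d e d2 d3.
have key : forall x y z : int, Posz M <= x + y + z ->
  Kc C 1 1 (e+d3)%N (e+d2)%N (d2+d3)%N * phi (d2+d3) (e.+1+d3) (e.+1+d2) x y z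
  = phi (d2+d3) (e+d3) (e+d2) x y (z-1).
  move=> x y z hxyz.
  have := H23 _ _ _ hadm x y z.
  rewrite /mulY23 /signs !big_cons !big_nil.
  rewrite (@extZ_eq (d2+d3)%N (e.+1+d3)%N (e.+1+d2)%N); try lia; last exact: adm_d.
  rewrite !(@extZ0 _ IH); try lia.
  rewrite (@Qlt _ _ _ IHd x y (z+1)); last lia.
  by rewrite !mulr0 !addr0 => ->.
have Kne : Kc C 1 1 (e+d3)%N (e+d2)%N (d2+d3)%N != 0 by apply: Kpp_neq0; lia.
split.
  apply/eqP => hz; have := key (Posz d3) (Posz d2) (Posz e.+1) ltac:(lia).
  rewrite hz mulr0 (_ : Posz e.+1 - 1 = Posz e); last lia.
  move=> /esym hz'; case: IHd => + _; rewrite hz' eqxx //; lia.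
move=> a b c hl hne.
have := key a b c ltac:(lia).
have -> : phi (d2+d3) (e+d3) (e+d2) a b (c - 1) = 0.
  case: IHd => _; apply; first lia.
  apply/negP => /eqP [h1 h2 h3]; move/negP: hne; apply; apply/eqP.
  rewrite h1 h2; congr (_, _, _); lia.
by move/eqP; rewrite mulf_eq0 (negbTE Kne) /= => /eqP.
Qed.

Lemma step M : (forall d1 d2 d3, (d1+d2+d3 < M)%N -> Q d1 d2 d3) ->
  forall d1 d2 d3, (d1+d2+d3)%N = M -> Q d1 d2 d3.
Proof.
move=> IH d1 d2 d3 hM.
have [hI [h0 [H12 [H13 H23]]]] := H.
case: d3 hM => [|e] hM; last exact: (@step12 _ IH _ _ _ hM).
case: d2 hM => [|e] hM; last exact: (@step13 _ IH _ _ _ hM).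
case: d1 hM => [|e] hM; last exact: (@step23 _ IH _ _ _ hM).
rewrite /Q !addn0 h0 /lp1 eqxx /=; split; first exact: oner_neq0.
move=> a b c _ hne; case: ifP => // /andP [/andP [/eqP ha /eqP hb] /eqP hc].
by move: hne; rewrite ha hb hc eqxx.
Qed.

Lemma mainQ n : forall d1 d2 d3, (d1+d2+d3 < n)%N -> Q d1 d2 d3.
Proof.
elim: n => [|n IHn] d1 d2 d3 hl; first lia.
have [hlt|heq] : (d1+d2+d3 < n)%N \/ (d1+d2+d3 = n)%N by lia.
  exact: IHn.
exact: (@step _ IHn _ _ _ heq).
Qed.
End Main.

Theorem mainTheorem5 (C : numClosedFieldType) (phi : nat -> nat -> nat -> lp C) :
  is_genus2_schur phi ->
  forall j1 j2 j3 : nat, admissible j1 j2 j3 ->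
    let d1 := ((j2 + j3 - j1)./2)%N in
    let d2 := ((j1 + j3 - j2)./2)%N in
    let d3 := ((j1 + j2 - j3)./2)%N in
    phi j1 j2 j3 (Posz d3) (Posz d2) (Posz d1) != 0 /\
    (forall a b c : int,
       Posz ((j1 + j2 + j3)./2)%N <= a + b + c ->
       (a, b, c) != (Posz d3, Posz d2, Posz d1) ->
       phi j1 j2 j3 a b c = 0).
Proof.
move=> H j1 j2 j3 hA.
have [d1 [d2 [d3 [[e1] [[e2] [e3]]]]]] := adm_ex _ _ _ hA.
subst j1 j2 j3.
have E1 : ((d1 + d3 + (d1 + d2) - (d2 + d3))./2 = d1)%N by lia.
have E2 : ((d2 + d3 + (d1 + d2) - (d1 + d3))./2 = d2)%N by lia.
have E3 : ((d2 + d3 + (d1 + d3) - (d1 + d2))./2 = d3)%N by lia.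
have E4 : ((d2 + d3 + (d1 + d3) + (d1 + d2))./2 = d1 + d2 + d3)%N by lia.
cbv zeta; rewrite E1 E2 E3 E4.
exact: (@mainQ C phi H _ _ _ _ (ltnSn _)).
Qed.
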